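(* Let $(\mathbb{P},\le,f)$ be a forcing property for $\mathcal{L}_A$. For all $p\in\mathbb{P}$ and sentences of $\mathcal{L}_A(C)$ of the indicated forms: $F^w_p(\neg\varphi)=1-\inf_{q\le p}F^w_q(\varphi)$; $F^w_p(\tfrac12\varphi)=\tfrac12F^w_p(\varphi)$; $F^w_p(\varphi\dotplus\psi)=\sup_{q\le p}\inf_{q'\le q}\min\big(F^w_{q'}(\varphi)+F^w_{q'}(\psi),1\big)$; $F^w_p(\bigwedge\Phi)=\sup_{q\le p}\inf_{q'\le q}\inf_{\varphi\in\Phi}F^w_{q'}(\varphi)$; $F^w_p(\inf_x\varphi(x))=\sup_{q\le p}\inf_{q'\le q}\inf_{c\in C}F^w_{q'}(\varphi(c))$.
   Context: $\mathcal{L}$ is a countable continuous signature; formulas of $\mathcal{L}_{\omega_1,\omega}$ are built from atomic formulas using $\neg$, $\tfrac12$, $\dotplus$, countable conjunctions $\bigwedge$ and $\inf_x$. $\mathcal{L}_A$ is a countable fragment, $C=\{c_i:i<\omega\}$ new constants, $\mathcal{L}_A(C)$ the smallest countable fragment of $\mathcal{L}_{\omega_1,\omega}(C)$ containing $\mathcal{L}_A$, $\mathcal{L}_A^{as}(C)$ its atomic sentences, $\mathcal{T}(C)$ closed terms. A forcing property $(\mathbb{P},\le,f)$: poset with $f_p\colon\mathcal{L}_A^{as}(C)\to[0,1]$ such that (1) $p\le q\Rightarrow f_p\le f_q$; (2) for every $p$, $\varepsilon>0$, $\tau,\sigma\in\mathcal{T}(C)$, atomic $\varphi(x)$ there are $q\le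 p$, $c\in C$ with $f_q(d(\tau,c))<\varepsilon$, $f_q(d(\tau,\sigma))<f_p(d(\sigma,\tau))+\varepsilon$, and if $f_p(d(\tau,\sigma))<\delta_{\varphi,x}(\varepsilon)$ then $f_q(\varphi(\sigma))<f_p(\varphi(\tau))+\varepsilon$. $F_p$ on sentences: $f_p$ on atomics; $F_p(\neg\varphi)=1-\inf_{q\le p}F_q(\varphi)$; $F_p(\tfrac12\varphi)=\tfrac12F_p(\varphi)$; $F_p(\varphi\dotplus\psi)=\min(F_p(\varphi)+F_p(\psi),1)$; $F_p(\bigwedge\Phi)=\inf_{\varphi\in\Phi}F_p(\varphi)$; $F_p(\inf_x\varphi)=\inf_{c\in C}F_p(\varphi(c))$. Weak forcing: $F^w_p(\varphi)=\sup_{q\le p}\inf_{q'\le q}F_{q'}(\varphi)$. *)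

(* Defs.v *)
From HB Require Import structures.
From mathcomp Require Import all_boot all_order all_algebra.
From mathcomp Require Import boolp classical_sets reals.
Set Implicit Arguments. Unset Strict Implicit. Unset Printing Implicit Defensive.
Import Order.TTheory GRing.Theory Num.Theory.
Local Open Scope ring_scope.
Local Open Scope classical_set_scope.

(* A countable continuous signature: function and predicate symbols with
   arities.  Constants of L are 0-ary function symbols.  The new constants
   C = {c_i : i < omega} are represented by [Cst i]. *)
Record sig := Sig {
  fsym : countType; fari : fsym -> nat;
  psym : countType; pari : psym -> nat }.

Section Syntax.
Variable L : sig.

Inductive term : Type :=
| Var : nat -> term
| Cst : nat -> term
| App : forall f : fsym L, ('I_(fari f) -> term) -> term.

Inductive atomic : Type :=
| AtP : forall P : psym L, ('I_(pari P) -> term) -> atomic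
| AtD : term -> term -> atomic.

Inductive formula : Type :=
| FAtom : atomic -> formula
| FNeg : formula -> formula
| FHalf : formula -> formula
| FDplus : formula -> formula -> formula
| FConj : (nat -> formula) -> formula
| FInf : nat -> formula -> formula.

Fixpoint t_fv (t : term) (x : nat) : Prop :=
  match t with
  | Var n => n = x
  | Cst _ => False
  | App f a => exists i, t_fv (a i) x
  end.

Definition a_fv (a : atomic) (x : nat) : Prop :=
  match a with
  | AtP P ts => exists i, t_fv (ts i) x
  | AtD t1 t2 => t_fv t1 x \/ t_fv t2 x
  end.

Fixpoint f_fv (phi : formula) (x : nat) : Prop :=
  match phi with
  | FAtom a => a_fv a x
  | FNeg psi => f_fv psi x
  | FHalf psi => f_fv psi x
  | FDplus psi chi => f_fv psi x \/ f_fv chi x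
  | FConj Phi => exists n, f_fv (Phi n) x
  | FInf y psi => y <> x /\ f_fv psi x
  end.

Definition closed_term (t : term) : Prop := forall x, ~ t_fv t x.
Definition atomic_sentence (a : atomic) : Prop := forall x, ~ a_fv a x.
Definition sentence (phi : formula) : Prop := forall x, ~ f_fv phi x.

Fixpoint t_subst (x : nat) (s : term) (t : term) : term :=
  match t with
  | Var n => if n == x then s else Var n
  | Cst i => Cst i
  | App f a => App (fun i => t_subst x s (a i))
  end.

Definition a_subst (x : nat) (s : term) (a : atomic) : atomic :=
  match a with
  | AtP P ts => AtP (fun i => t_subst x s (ts i))
  | AtD t1 t2 => AtD (t_subst x s t1) (t_subst x s t2)
  end.

(* substitution of a closed term (only used with closed terms, so no capture) *)
Fixpoint f_subst (x : nat) (s : term) (phi : formula) : formula :=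
  match phi with
  | FAtom a => FAtom (a_subst x s a)
  | FNeg psi => FNeg (f_subst x s psi)
  | FHalf psi => FHalf (f_subst x s psi)
  | FDplus psi chi => FDplus (f_subst x s psi) (f_subst x s chi)
  | FConj Phi => FConj (fun n => f_subst x s (Phi n))
  | FInf y psi => if y == x then FInf y psi else FInf y (f_subst x s psi)
  end.

Fixpoint t_subst_env (e : nat -> nat) (t : term) : term :=
  match t with
  | Var n => Cst (e n)
  | Cst i => Cst i
  | App f a => App (fun i => t_subst_env e (a i))
  end.

Definition a_subst_env (e : nat -> nat) (a : atomic) : atomic :=
  match a with
  | AtP P ts => AtP (fun i => t_subst_env e (ts i))
  | AtD t1 t2 => AtD (t_subst_env e t1) (t_subst_env e t2)
  end.

Definition upd (e : nat -> nat) (x c : nat) : nat -> nat :=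
  fun n => if n == x then c else e n.

End Syntax.

Arguments Var {L}. Arguments Cst {L}.

(* A continuous signature: the signature together with the uniform
   continuity moduli delta_{phi,x} of its atomic formulas. *)
Record csig (R : realType) := CSig {
  csig_sig :> sig;
  delta : atomic csig_sig -> nat -> R -> R;
  delta_pos : forall a x e, 0 < e -> 0 < delta a x e }.

Record forcing (R : realType) (L : csig R) := Forcing {
  cond : Type;
  le : cond -> cond -> Prop;
  le_refl : forall p, le p p;
  le_trans : forall p q r, le p q -> le q r -> le p r;
  le_anti : forall p q, le p q -> le q p -> p = q;
  fval : cond -> atomic L -> R;
  fval_range : forall p a, atomic_sentence a -> 0 <= fval p a <= 1;
  fval_mono : forall p q a, atomic_sentence a -> le p q -> fval p a <= fval q a;
  fval_dense : forall p (eps : R) (tau sigma : term L) (phi : atomic L) (x : nat),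
    0 < eps -> closed_term tau -> closed_term sigma ->
    (forall y, a_fv phi y -> y = x) ->
    exists q c, le q p /\
      fval q (AtD tau (Cst c)) < eps /\
      fval q (AtD tau sigma) < fval p (AtD sigma tau) + eps /\
      (fval p (AtD tau sigma) < delta phi x eps ->
       fval q (a_subst x sigma phi) < fval p (a_subst x tau phi) + eps) }.

Section Forcing.
Variables (R : realType) (L : csig R) (FP : forcing L).

Definition below (p : cond FP) : set (cond FP) := [set q | le q p].

(* F_p, defined with an environment assigning constants to variables;
   on sentences the environment is irrelevant. *)
Fixpoint Fenv (phi : formula L) : (nat -> nat) -> cond FP -> R :=
  match phi with
  | FAtom a => fun e p => fval p (a_subst_env e a)
  | FNeg psi => fun e p => 1 - inf [set Fenv psi e q | q in below p]
  | FHalf psi => fun e p => Fenv psi e p / 2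
  | FDplus psi chi => fun e p => Num.min (Fenv psi e p + Fenv chi e p) 1
  | FConj Phi => fun e p => inf [set Fenv (Phi n) e p | n in [set: nat]]
  | FInf x psi => fun e p => inf [set Fenv psi (upd e x c) p | c in [set: nat]]
  end.

Definition F (p : cond FP) (phi : formula L) : R := Fenv phi (fun _ => 0%N) p.

Definition Fw (p : cond FP) (phi : formula L) : R :=
  sup [set inf [set F q' phi | q' in below q] | q in below p].

End Forcing.

(* Main.v *)
Set Warnings "-notation-overridden,-ambiguous-paths,-parsing".
Require Import Defs.
From HB Require Import structures.
From mathcomp Require Import all_boot all_order all_algebra.
From mathcomp Require Import boolp classical_sets reals.
From mathcomp Require Import lra.
Import Order.TTheory GRing.Theory Num.Theory.
Local Open Scope ring_scope.
Local Open Scope classical_set_scope.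

Section Gen.
Context {R : realType}.


Definition bnd {T} (A : set T) (g : T -> R) := forall t, A t -> 0 <= g t <= 1.

Lemma img_ub {T} {A : set T} {g : T -> R} : bnd A g -> has_ubound [set g t | t in A].
Proof. by move=> H; exists 1 => y [t At <-]; case/andP: (H t At). Qed.

Lemma img_lb {T} {A : set T} {g : T -> R} : bnd A g -> has_lbound [set g t | t in A].
Proof. by move=> H; exists 0 => y [t At <-]; case/andP: (H t At). Qed.

Lemma sup_ub_img {T} {A : set T} {g : T -> R} {t} : bnd A g -> A t -> g t <= sup [set g t | t in A].
Proof. by move=> H At; have := ub_le_sup (img_ub H); apply; exists t. Qed.

Lemma sup_le_img {T} {A : set T} {g : T -> R} {t0} {a : R} : A t0 -> (forall t, A t -> g t <= a) ->
  sup [set g t | t in A] <= a.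
Proof.
move=> A0 Ha; apply: ge_sup; first by exists (g t0), t0.
by move=> y [t At <-]; exact: Ha.
Qed.

Lemma inf_lb_img {T} {A : set T} {g : T -> R} {t} : bnd A g -> A t -> inf [set g t | t in A] <= g t.
Proof. by move=> H At; have := ge_inf (img_lb H); apply; exists t. Qed.

Lemma inf_ge_img {T} {A : set T} {g : T -> R} {t0} {a : R} : A t0 -> (forall t, A t -> a <= g t) ->
  a <= inf [set g t | t in A].
Proof.
move=> A0 Ha; apply: lb_le_inf; first by exists (g t0), t0.
by move=> y [t At <-]; exact: Ha.
Qed.

Lemma sup01 {T} {A : set T} {g : T -> R} {t0} : A t0 -> bnd A g -> 0 <= sup [set g t | t in A] <= 1.
Proof.
move=> A0 H; apply/andP; split.
  apply: le_trans (sup_ub_img H A0); by case/andP: (H t0 A0).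
apply: (sup_le_img A0) => t At; by case/andP: (H t At).
Qed.

Lemma inf01 {T} {A : set T} {g : T -> R} {t0} : A t0 -> bnd A g -> 0 <= inf [set g t | t in A] <= 1.
Proof.
move=> A0 H; apply/andP; split.
  apply: (inf_ge_img A0) => t At; by case/andP: (H t At).
apply: le_trans (inf_lb_img H A0) _; by case/andP: (H t0 A0).
Qed.

Lemma inf_1m {T} {A : set T} {g : T -> R} {t0} : A t0 -> bnd A g ->
  inf [set 1 - g t | t in A] = 1 - sup [set g t | t in A].
Proof.
move=> A0 H.
have H' : bnd A (fun t => 1 - g t).
  by move=> t At; case/andP: (H t At) => a b; apply/andP; split; lra.
apply/eqP; rewrite eq_le; apply/andP; split.
  have : sup [set g t | t in A] <= 1 - inf [set 1 - g t | t in A].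
    apply: (sup_le_img A0) => t At; have := inf_lb_img H' At; lra.
  lra.
apply: (inf_ge_img A0) => t At; have := sup_ub_img H At; lra.
Qed.

Lemma sup_1m {T} {A : set T} {g : T -> R} {t0} : A t0 -> bnd A g ->
  sup [set 1 - g t | t in A] = 1 - inf [set g t | t in A].
Proof.
move=> A0 H.
have H' : bnd A (fun t => 1 - g t).
  by move=> t At; case/andP: (H t At) => a b; apply/andP; split; lra.
apply/eqP; rewrite eq_le; apply/andP; split.
  apply: (sup_le_img A0) => t At; have := inf_lb_img H At; lra.
have : 1 - sup [set 1 - g t | t in A] <= inf [set g t | t in A].
  apply: (inf_ge_img A0) => t At; have := sup_ub_img H' At; lra.
lra.
Qed.

Lemma inf_half {T} {A : set T} {g : T -> R} {t0} : A t0 -> bnd A g ->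
  inf [set g t / 2 | t in A] = inf [set g t | t in A] / 2.
Proof.
move=> A0 H.
have H' : bnd A (fun t => g t / 2).
  by move=> t At; case/andP: (H t At) => a b; apply/andP; split; lra.
apply/eqP; rewrite eq_le; apply/andP; split.
  have : inf [set g t / 2 | t in A] * 2 <= inf [set g t | t in A].
    apply: (inf_ge_img A0) => t At; have := inf_lb_img H' At; lra.
  lra.
apply: (inf_ge_img A0) => t At; have := inf_lb_img H At; lra.
Qed.

Lemma sup_half {T} {A : set T} {g : T -> R} {t0} : A t0 -> bnd A g ->
  sup [set g t / 2 | t in A] = sup [set g t | t in A] / 2.
Proof.
move=> A0 H.
have H' : bnd A (fun t => g t / 2).
  by move=> t At; case/andP: (H t At) => a b; apply/andP; split; lra.
apply/eqP; rewrite eq_le; apply/andP; split.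
  apply: (sup_le_img A0) => t At; have := sup_ub_img H At; lra.
have : sup [set g t | t in A] <= sup [set g t / 2 | t in A] * 2.
  apply: (sup_le_img A0) => t At; have := sup_ub_img H' At; lra.
lra.
Qed.

End Gen.

Section Forc.
Context {R : realType} {L : csig R} {FP : forcing L}.

Lemma tse_closed (e : nat -> nat) (t : term L) x : ~ t_fv (t_subst_env e t) x.
Proof.
elim: t => [n|n|f a IH] //=.
by case=> i; apply: IH.
Qed.

Lemma ase_sentence (e : nat -> nat) (a : atomic L) : atomic_sentence (a_subst_env e a).
Proof.
case: a => [P ts|t1 t2] x /=.
  by case=> i; apply: tse_closed.
by case; apply: tse_closed.
Qed.

Lemma bp (p : cond FP) : below p p.
Proof. exact: Defs.le_refl. Qed.

Lemma Fenv01 (phi : formula L) : forall e (p : cond FP), 0 <= Fenv phi e p <= 1.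
Proof.
elim: phi => [a|psi IH|psi IH|psi IH chi IH'|Phi IH|x psi IH] e p /=.
- by apply: fval_range; apply: ase_sentence.
- have := inf01 (bp p) (fun q _ => IH e q); lra.
- have := IH e p; lra.
- have := IH e p; have := IH' e p.
  case: (leP (Fenv psi e p + Fenv chi e p) 1) => ?; lra.
- exact: (inf01 (t0:=0%N) I (fun n _ => IH n e p)).
- exact: (inf01 (t0:=0%N) I (fun n _ => IH (upd e x n) p)).
Qed.

Lemma Fenv_mono (phi : formula L) : forall e (p q : cond FP), le q p ->
  Fenv phi e q <= Fenv phi e p.
Proof.
elim: phi => [a|psi IH|psi IH|psi IH chi IH'|Phi IH|x psi IH] e p q qp /=.
- by apply: fval_mono => //; apply: ase_sentence.
- suff : inf [set Fenv psi e r | r in below p] <= inf [set Fenv psi e r | r in below q] by lra.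
  apply: (inf_ge_img (bp q)) => r rq.
  apply: (inf_lb_img (fun r _ => Fenv01 psi e r)).
  exact: Defs.le_trans rq qp.
- have := IH e p q qp; lra.
- have := IH e p q qp; have := IH' e p q qp.
  case: (leP (Fenv psi e p + Fenv chi e p) 1) => ?;
  case: (leP (Fenv psi e q + Fenv chi e q) 1) => ?; lra.
- apply: (inf_ge_img (t0:=0%N) I) => n _.
  apply: le_trans (IH n e p q qp).
  exact: (inf_lb_img (fun n _ => Fenv01 (Phi n) e q)).
- apply: (inf_ge_img (t0:=0%N) I) => n _.
  apply: le_trans (IH (upd e x n) p q qp).
  exact: (inf_lb_img (fun n _ => Fenv01 psi (upd e x n) q)).
Qed.


Lemma tsubst_env (e : nat -> nat) x c (t : term L) :
  t_subst_env e (t_subst x (Cst c) t) = t_subst_env (upd e x c) t.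
Proof.
elim: t => [n|n|f a IH] //=.
- by rewrite /upd; case: (n == x).
- by f_equal; apply: funext => i; apply: IH.
Qed.

Lemma Fenv_subst x c (phi : formula L) : forall e,
  Fenv (FP:=FP) (f_subst x (Cst c) phi) e = Fenv phi (upd e x c).
Proof.
elim: phi => [a|psi IH|psi IH|psi IH chi IH'|Phi IH|y psi IH] e /=;
  apply: funext => p.
- congr fval; case: a => [P ts|t1 t2] /=.
    by f_equal; apply: funext => i; apply: tsubst_env.
  by rewrite !tsubst_env.
- by rewrite IH.
- by rewrite IH.
- by rewrite IH IH'.
- by congr inf; apply: eq_imagel => n _; rewrite IH.
- case: eqP => [->|ne] /=.
    congr inf; apply: eq_imagel => c' _; congr Fenv; apply: funext => n.
    by rewrite /upd; case: (n == x).
  congr inf; apply: eq_imagel => c' _; rewrite IH; congr Fenv; apply: funext => n.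
  rewrite /upd; case: (n =P x) => [->|]; case: (_ =P y) => // H.
  by case: ne.
Qed.

Lemma F01 (p : cond FP) phi : 0 <= F p phi <= 1.
Proof. exact: Fenv01. Qed.

Lemma F_mono {p q : cond FP} phi : le q p -> F q phi <= F p phi.
Proof. exact: Fenv_mono. Qed.

Lemma bndF (q : cond FP) phi : bnd (below q) (fun q' => F q' phi).
Proof. by move=> r _; apply: F01. Qed.

Lemma bndIF (q : cond FP) phi : bnd (below q) (fun q' => inf [set F r phi | r in below q']).
Proof. by move=> r _; apply: (inf01 (bp r) (bndF r phi)). Qed.

Lemma Fw01 (p : cond FP) phi : 0 <= Fw p phi <= 1.
Proof. exact: (sup01 (bp p) (bndIF p phi)). Qed.

Lemma Fw_le_F (q : cond FP) phi : Fw q phi <= F q phi.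
Proof.
apply: (sup_le_img (bp q)) => r rq.
exact: le_trans (inf_lb_img (bndF r phi) (bp r)) (F_mono phi rq).
Qed.

Lemma inf_le_Fw {q r : cond FP} phi : le r q ->
  inf [set F r' phi | r' in below r] <= Fw q phi.
Proof. move=> rq; exact: (sup_ub_img (bndIF q phi) rq). Qed.

Lemma min_le_l (a b : R) : Num.min a b <= a.
Proof. by rewrite ge_min lexx. Qed.
Lemma min_le_r (a b : R) : Num.min a b <= b.
Proof. by rewrite ge_min lexx orbT. Qed.

Lemma bnd_min {T} (A : set T) {a b : T -> R} :
  (forall t, 0 <= a t <= 1) -> (forall t, 0 <= b t <= 1) ->
  bnd A (fun t => Num.min (a t + b t) 1).
Proof.
move=> Ha Hb t _; have := Ha t; have := Hb t.
by case: (leP (a t + b t) 1) => ?; lra.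
Qed.

Lemma dplus_key (q : cond FP) phi psi :
  inf [set Num.min (F q' phi + F q' psi) 1 | q' in below q] =
  inf [set Num.min (Fw q' phi + Fw q' psi) 1 | q' in below q].
Proof.
have B1 := bnd_min (below q) (fun t => F01 t phi) (fun t => F01 t psi).
have B2 := bnd_min (below q) (fun t => Fw01 t phi) (fun t => Fw01 t psi).
apply/eqP; rewrite eq_le; apply/andP; split.
- apply: (inf_ge_img (bp q)) => q' q'q.
  set m := inf _.
  have m1 : m <= 1 by apply: le_trans (inf_lb_img B1 (bp q)) (min_le_r _ _).
  have m2 : m <= Fw q' phi + Fw q' psi.
    have h : m - Fw q' psi <= inf [set F r phi | r in below q'].
      apply: (inf_ge_img (bp q')) => r rq'.
      have h2 : m - F r phi <= inf [set F r' psi | r' in below r].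
        apply: (inf_ge_img (bp r)) => r' r'r.
        have := inf_lb_img B1 (Defs.le_trans r'r (Defs.le_trans rq' q'q)).
        have := min_le_l (F r' phi + F r' psi) 1.
        have := F_mono phi r'r.
        rewrite -/m; lra.
      have := inf_le_Fw psi rq'; lra.
    have := inf_le_Fw phi (bp q'); lra.
  by case: (leP (Fw q' phi + Fw q' psi) 1) => ?; lra.
- apply: (inf_ge_img (bp q)) => q' q'q.
  apply: le_trans (inf_lb_img B2 q'q) _.
  have := Fw_le_F q' phi; have := Fw_le_F q' psi.
  by case: (leP (Fw q' phi + Fw q' psi) 1) => ?;
     case: (leP (F q' phi + F q' psi) 1) => ?; lra.
Qed.

Lemma fam {Ix : Type} (i0 : Ix) (G : Ix -> formula L) (q : cond FP) :
  inf [set inf [set F q' (G i) | i in [set: Ix]] | q' in below q] =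
  inf [set inf [set Fw q' (G i) | i in [set: Ix]] | q' in below q].
Proof.
have bI : forall q' : cond FP, bnd [set: Ix] (fun i => F q' (G i)).
  by move=> q' i _; apply: F01.
have bW : forall q' : cond FP, bnd [set: Ix] (fun i => Fw q' (G i)).
  by move=> q' i _; apply: Fw01.
have bO : forall q, bnd (below q) (fun q' : cond FP => inf [set F q' (G i) | i in [set: Ix]]).
  by move=> q0 q' _; apply: (inf01 (t0:=i0) I (bI q')).
have bOW : forall q, bnd (below q) (fun q' : cond FP => inf [set Fw q' (G i) | i in [set: Ix]]).
  by move=> q0 q' _; apply: (inf01 (t0:=i0) I (bW q')).
apply/eqP; rewrite eq_le; apply/andP; split.
- apply: (inf_ge_img (bp q)) => q' q'q.
  apply: (inf_ge_img (t0:=i0) I) => i _.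
  apply: le_trans (inf_le_Fw (G i) (bp q')).
  apply: (inf_ge_img (bp q')) => r rq'.
  apply: le_trans (inf_lb_img (bO q) (Defs.le_trans rq' q'q)) _.
  exact: (inf_lb_img (bI r) (I : [set: Ix] i)).
- apply: (inf_ge_img (bp q)) => q' q'q.
  apply: le_trans (inf_lb_img (bOW q) q'q) _.
  apply: (inf_ge_img (t0:=i0) I) => i _.
  exact: le_trans (inf_lb_img (bW q') (I : [set: Ix] i)) (Fw_le_F _ _).
Qed.

End Forc.

Theorem proposition2p9 (R : realType) (L : csig R) (FP : forcing L) (p : cond FP) :
  (forall phi : formula L, sentence (FNeg phi) ->
     Fw p (FNeg phi) = 1 - inf [set Fw q phi | q in below p]) /\
  (forall phi : formula L, sentence (FHalf phi) ->
     Fw p (FHalf phi) = Fw p phi / 2) /\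
  (forall phi psi : formula L, sentence (FDplus phi psi) ->
     Fw p (FDplus phi psi) =
     sup [set inf [set Num.min (Fw q' phi + Fw q' psi) 1 | q' in below q]
         | q in below p]) /\
  (forall Phi : nat -> formula L, sentence (FConj Phi) ->
     Fw p (FConj Phi) =
     sup [set inf [set inf [set Fw q' (Phi n) | n in [set: nat]] | q' in below q]
         | q in below p]) /\
  (forall (x : nat) (phi : formula L), sentence (FInf x phi) ->
     Fw p (FInf x phi) =
     sup [set inf [set inf [set Fw q' (f_subst x (Cst c) phi) | c in [set: nat]]
                  | q' in below q]
         | q in below p]).
Proof.
split; [|split; [|split; [|split]]].
- move=> phi _.
  have E : forall q : cond FP,
      inf [set F q' (FNeg phi) | q' in below q] = 1 - Fw q phi.
    move=> q.
    have -> : [set F q' (FNeg phi) | q' in below q] =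
              [set 1 - inf [set F r phi | r in below q'] | q' in below q] by [].
    by rewrite (inf_1m (bp q) (bndIF q phi)).
  have -> : Fw p (FNeg phi) =
     sup [set inf [set F q' (FNeg phi) | q' in below q] | q in below p] by [].
  rewrite (eq_imagel (fun q _ => E q)).
  exact: (sup_1m (bp p) (fun q _ => Fw01 q phi)).
- move=> phi _.
  have E : forall q : cond FP,
      inf [set F q' (FHalf phi) | q' in below q] =
      inf [set F q' phi | q' in below q] / 2.
    move=> q.
    have -> : [set F q' (FHalf phi) | q' in below q] =
              [set F q' phi / 2 | q' in below q] by [].
    by rewrite (inf_half (bp q) (bndF q phi)).
  have -> : Fw p (FHalf phi) =
     sup [set inf [set F q' (FHalf phi) | q' in below q] | q in below p] by [].
  rewrite (eq_imagel (fun q _ => E q)).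
  exact: (sup_half (bp p) (bndIF p phi)).
- move=> phi psi _.
  have -> : Fw p (FDplus phi psi) =
     sup [set inf [set Num.min (F q' phi + F q' psi) 1 | q' in below q]
         | q in below p] by [].
  by congr sup; apply: eq_imagel => q _; apply: dplus_key.
- move=> Phi _.
  have -> : Fw p (FConj Phi) =
     sup [set inf [set inf [set F q' (Phi n) | n in [set: nat]] | q' in below q]
         | q in below p] by [].
  by congr sup; apply: eq_imagel => q _; apply: (fam 0%N).
- move=> x phi _.
  have -> : Fw p (FInf x phi) =
     sup [set inf [set inf [set F q' (f_subst x (Cst c) phi) | c in [set: nat]]
                  | q' in below q] | q in below p].
    rewrite /Fw; congr sup; apply: eq_imagel => q _.
    congr inf; apply: eq_imagel => q' _.
    rewrite /F /=; congr inf; apply: eq_imagel => c _.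
    by rewrite Fenv_subst.
  by congr sup; apply: eq_imagel => q _; apply: (fam 0%N).
Qed.
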